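(* Let $m=d_1+\cdots+d_k$ with $d_j\ge1$, $W_1,\ldots,W_k$ 2-dimensional vector spaces, and suppose the 1-dimensional subspaces $$\Gamma_j=\bigotimes_{r\ne j}\bigotimes_{p=1}^{d_r}a_j^{r,p},\qquad a_j^{r,p}\subset W_r^*\ \text{1-dimensional},$$ are such that $\sum_{j=1}^k ins_j(S^{d_j}W_j^*\otimes\Gamma_j)$ has dimension $m+1$. Then $a_j^{r,1}=\cdots=a_j^{r,d_r}=:a_j^r$ for all $j\neq r$, i.e. $\Gamma_j=\bigotimes_{r\ne j}(a_j^r)^{\otimes d_r}$.
   Context: The vector spaces are real or complex. $S^dW^*\subset(W^* )^{\otimes d}$ denotes the symmetric tensors. For each $j$, $ins_j:(W_j^* )^{\otimes d_j}\otimes\bigotimes_{i\ne j}(W_i^* )^{\otimes d_i}\to\bigotimes_{i=1}^k(W_i^* )^{\otimes d_i}$ places the first factor into the $j$-th group of $d_j$ slots; in $\bigotimes_{r\ne j}\bigotimes_{p}a_j^{r,p}$ the factor $a_j^{r,p}$ occupies the $p$-th slot of the $r$-th group. *)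

(* Defs.v *)
From HB Require Import structures.
From mathcomp Require Import all_boot all_order all_algebra all_fingroup.
From mathcomp Require Import reals.
From mathcomp.real_closed Require Import complex.
Set Implicit Arguments. Unset Strict Implicit. Unset Printing Implicit Defensive.
Import GRing.Theory.
Local Open Scope ring_scope.

(* W_r^* is identified with K^2 ('rV[K]_2).  A tensor in
   bigotimes_r (W_r^* )^{(x) d_r} is a K-valued function on the multi-indices
   {ffun slot -> 'I_2}.  A tensor in (W_j^* )^{(x) d_j} is a K-valued function
   on {ffun 'I_(d j) -> 'I_2}. *)

Section Tensors.
Variables (K : fieldType) (k : nat) (d : 'I_k -> nat).

Definition slot := {r : 'I_k & 'I_(d r)}.
Definition mindex := {ffun slot -> 'I_2}.
Definition tensor := {ffun mindex -> K^o}.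

Definition gindex (j : 'I_k) := {ffun 'I_(d j) -> 'I_2}.
Definition gtensor (j : 'I_k) := {ffun gindex j -> K^o}.

Definition permt (j : 'I_k) (s : {perm 'I_(d j)}) (f : gtensor j) : gtensor j :=
  [ffun i : gindex j => f [ffun p => i (s p)]].

(* S^{d_j} W_j^* : the symmetric tensors, i.e. those fixed by every permutation
   of the d_j slots *)
Definition symt (j : 'I_k) : {vspace gtensor j} :=
  (\bigcap_(s : {perm 'I_(d j)}) lker (linfun (fun f => permt s f - f)))%VS.

Definition restr (j : 'I_k) (i : mindex) : gindex j :=
  [ffun p => i (Tagged (fun r => 'I_(d r)) p)].

(* ins_j (f (x) Gamma_j) where Gamma_j is spanned by the pure tensor
   bigotimes_{r <> j} bigotimes_p a j r p *)
Definition insj (a : forall j r : 'I_k, 'I_(d r) -> 'rV[K]_2) (j : 'I_k)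
  (f : gtensor j) : tensor :=
  [ffun i : mindex => f (restr j i) *
     \prod_(s : slot | tag s != j) (a j (tag s) (tagged s)) 0 (i s)].

Definition insSym (a : forall j r : 'I_k, 'I_(d r) -> 'rV[K]_2) (j : 'I_k)
  : {vspace tensor} :=
  (linfun (insj a (j := j)) @: symt j)%VS.

End Tensors.

Definition cor233_over (K : fieldType) : Prop :=
  forall (k : nat) (d : 'I_k -> nat)
    (a : forall j r : 'I_k, 'I_(d r) -> 'rV[K]_2),
    (forall j, (0 < d j)%N) ->
    (forall j r (p : 'I_(d r)), r != j -> a j r p != 0) ->
    \dim (\sum_(j < k) insSym a j)%VS = (\sum_(j < k) d j).+1 ->
    forall j r (p q : 'I_(d r)), r != j ->
      (<[a j r p]> = <[a j r q]>)%VS.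

(* Main.v *)
Require Import Defs.
From HB Require Import structures.
From mathcomp Require Import all_boot all_order all_algebra all_fingroup.
From mathcomp Require Import reals.
From mathcomp.real_closed Require Import complex.
From mathcomp Require Import zify.
Set Implicit Arguments. Unset Strict Implicit. Unset Printing Implicit Defensive.
Import GRing.Theory Num.Theory.
Local Open Scope ring_scope.

Section Main.
Variables (K : numFieldType) (k : nat) (d : 'I_k -> nat).
Local Notation slot := (slot d).
Local Notation mindex := (mindex d).
Local Notation tensor := (tensor K d).

Definition det2 (v x : 'rV[K]_2) : K := v 0 0 * x 0 1 - v 0 1 * x 0 0.
Definition perp (x : 'rV[K]_2) : 'rV[K]_2 :=
  \row_(b < 2) (if (b : nat) == 0%N then x 0 1 else - x 0 0).
Definition pure (v : slot -> 'rV[K]_2) : tensor :=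
  [ffun i : mindex => \prod_s v s 0 (i s)].
Definition ip (T w : tensor) : K := \sum_i T i * w i.

Lemma sum2 (F : 'I_2 -> K) : \sum_b F b = F 0 + F 1.
Proof. by rewrite big_ord_recl big_ord1; congr (_ + F _); apply: val_inj. Qed.

Lemma ip_pure v x :
  ip (pure v) (pure (fun s => perp (x s))) = \prod_s det2 (v s) (x s).
Proof.
rewrite /ip /pure.
transitivity (\sum_(i : mindex) \prod_s (v s 0 (i s) * perp (x s) 0 (i s))).
  by apply: eq_bigr => i _; rewrite !ffunE big_split.
transitivity (\prod_s \sum_(b < 2) (v s 0 b * perp (x s) 0 b)).
  by rewrite bigA_distr_bigA.
apply: eq_bigr => s _; rewrite sum2 !mxE /= /det2.
have -> : (1 : 'I_2) = lift 0 0 by apply/val_inj.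
rewrite /= mulrN; congr (_ + _).
Qed.


Lemma det2xx x : det2 x x = 0.
Proof. by rewrite /det2 mulrC subrr. Qed.

Lemma det2C x y : det2 y x = - det2 x y.
Proof. by rewrite /det2 opprB [x 0 0 * _]mulrC [x 0 1 * _]mulrC. Qed.

Lemma rv2_neq0 (x : 'rV[K]_2) : x != 0 -> (x 0 0 != 0) || (x 0 1 != 0).
Proof.
apply: contraR; rewrite negb_or !negbK => /andP [/eqP h0 /eqP h1].
apply/eqP/rowP => i; rewrite !mxE; case: i => [[|[|//]]] Hi.
  by rewrite -h0; congr (x 0 _); apply: val_inj.
by rewrite -h1; congr (x 0 _); apply: val_inj.
Qed.

Definition vec1 (t : K) : 'rV[K]_2 := \row_(b < 2) (if (b : nat) == 0%N then 1 else t).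

Lemma det2_vec1 t t' : det2 (vec1 t) (vec1 t') = t' - t.
Proof. by rewrite /det2 !mxE /= mul1r mulr1. Qed.

Lemma det2_vec1r (a : 'rV[K]_2) t : det2 a (vec1 t) = a 0 0 * t - a 0 1.
Proof. by rewrite /det2 !mxE /= mulr1. Qed.

Lemma det2_vec1_neq0 (a : 'rV[K]_2) t : a != 0 -> t != a 0 1 / a 0 0 ->
  det2 a (vec1 t) != 0.
Proof.
move=> /rv2_neq0 anz ht; rewrite det2_vec1r.
have [a0|a0] := eqVneq (a 0 0) 0.
  by move: anz; rewrite a0 eqxx /= mul0r sub0r oppr_eq0.
apply: contra ht; rewrite subr_eq0 => /eqP <-.
by rewrite mulrC mulKf.
Qed.

Lemma parallel (x y : 'rV[K]_2) : x != 0 -> det2 y x = 0 -> y \in <[x]>%VS.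
Proof.
move=> /rv2_neq0 xnz; rewrite /det2 => /eqP; rewrite subr_eq0 => /eqP h.
have [x0|x0] := eqVneq (x 0 0) 0.
  move: xnz; rewrite x0 eqxx /= => x1.
  move: h; rewrite x0 mulr0 => /eqP; rewrite mulf_eq0 (negbTE x1) orbF => /eqP y0.
  apply/vlineP; exists (y 0 1 / x 0 1); apply/rowP => i; rewrite !mxE.
  case: i => [[|[|//]]] Hi.
    have -> : Ordinal Hi = 0 by apply: val_inj.
    by rewrite y0 x0 mulr0.
  have -> : Ordinal Hi = 1 by apply: val_inj.
  by rewrite mulfVK.
apply/vlineP; exists (y 0 0 / x 0 0); apply/rowP => i; rewrite !mxE.
case: i => [[|[|//]]] Hi.
  have -> : Ordinal Hi = 0 by apply: val_inj.
  by rewrite mulfVK.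
have -> : Ordinal Hi = 1 by apply: val_inj.
by rewrite mulrAC h mulfK.
Qed.

Definition tvals (B : seq K) n :=
  filter (fun m : nat => m%:R \notin B) (iota 0 (size B + n)).

Lemma natrK_inj : injective (fun m : nat => m%:R : K).
Proof. by move=> m n /eqP; rewrite eqr_nat => /eqP. Qed.

Lemma size_tvals B n : (n <= size (tvals B n))%N.
Proof.
have Hc := count_predC (fun m : nat => m%:R \notin B) (iota 0 (size B + n)).
rewrite size_iota in Hc.
have Hb : (count (predC (fun m : nat => m%:R \notin B)) (iota 0 (size B + n)) <= size B)%N.
  rewrite -size_filter.
  rewrite -(size_map (fun m : nat => m%:R : K)).
  apply: uniq_leq_size.
    rewrite (map_inj_uniq natrK_inj); apply: filter_uniq; exact: iota_uniq.
  by move=> y /mapP [m]; rewrite mem_filter /= negbK => /andP [h _] ->.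
rewrite /tvals size_filter; move: Hc Hb; lia.
Qed.

Definition tv (B : seq K) n (i : nat) : K := (nth 0%N (tvals B n) i)%:R.

Lemma tv_notin B n i : (i < n)%N -> tv B n i \notin B.
Proof.
move=> hi; have hs : (i < size (tvals B n))%N by apply: leq_trans hi (size_tvals B n).
have := mem_nth 0%N hs; rewrite mem_filter => /andP [] //.
Qed.

Lemma tv_inj B n i j : (i < n)%N -> (j < n)%N -> tv B n i = tv B n j -> i = j.
Proof.
move=> hi hj /natrK_inj.
have hu : uniq (tvals B n) by apply: filter_uniq; exact: iota_uniq.
move/eqP; rewrite nth_uniq //; first by move/eqP.
  exact: leq_trans hi (size_tvals B n).
exact: leq_trans hj (size_tvals B n).
Qed.

Definition powt j (c : 'rV[K]_2) : gtensor K d j := [ffun g : gindex d j => \prod_p c 0 (g p)].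
Arguments powt : clear implicits.

Lemma lfunE_lin (aT rT : vectType K) (f : aT -> rT) (lf : linear f) x :
  linfun f x = f x.
Proof.
pose fL : {linear aT -> rT} := HB.pack f (GRing.isLinear.Build _ _ _ _ f lf).
exact: (lfunE fL).
Qed.

Lemma powt_sym j c : powt j c \in symt K d j.
Proof.
rewrite memvE; apply/subv_bigcapP => s _; rewrite -memvE memv_ker.
rewrite lfunE_lin.
  apply/eqP/ffunP => g; rewrite !ffunE; apply/eqP; rewrite subr_eq0; apply/eqP.
  rewrite [RHS](reindex_inj (@perm_inj _ s)) /=.
  by apply: eq_bigr => p _; rewrite ffunE.
move=> al f h; apply/ffunP => g; rewrite !ffunE.
by rewrite scalerBr opprD addrACA.
Qed.

Lemma big_slot_tag (F : slot -> K) j :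
  \prod_(s : slot | tag s == j) F s = \prod_(p : 'I_(d j)) F (Tagged (fun r => 'I_(d r)) p).
Proof.
have := @sig_big_dep _ 1 *%R 'I_k (fun r => 'I_(d r)) (fun r => r == j) (fun _ _ => true)
  (fun r p => F (Tagged (fun r => 'I_(d r)) p)).
rewrite big_pred1_eq => ->.
by apply: eq_big => [[r p]|[r p] _] //=; rewrite andbT.
Qed.

Unset Implicit Arguments.
Variable a : forall j r : 'I_k, 'I_(d r) -> 'rV[K]_2.
Set Implicit Arguments.

Definition Ev (l : 'I_k) (c : 'rV[K]_2) : tensor :=
  pure (fun s => if tag s == l then c else a l (tag s) (tagged s)).


Lemma insj_powt j c : insj a (powt j c) = Ev j c.
Proof.
apply/ffunP => i; rewrite /Ev /pure !ffunE.
rewrite [RHS](bigID (fun s : slot => tag s == j)) /=; congr (_ * _).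
  rewrite big_slot_tag; apply: eq_bigr => p _.
  by rewrite /= eqxx /restr ffunE.
by apply: eq_bigr => s /negbTE ->.
Qed.

Lemma insj_linear j : linear (@insj K k d a j).
Proof.
move=> al f h; apply/ffunP => i; rewrite !ffunE.
by rewrite mulrDl scalerAl.
Qed.


Lemma Ev_in j c : Ev j c \in insSym a j.
Proof.
rewrite -insj_powt /insSym.
rewrite -(lfunE_lin (@insj_linear j)).
apply: memv_img; exact: powt_sym.
Qed.

Lemma ip_linear (w : tensor) : linear (fun T : tensor => ip T w : K^o).
Proof.
move=> al T1 T2; rewrite /ip scaler_sumr -big_split; apply: eq_bigr => i _.
by rewrite !ffunE mulrDl scalerAl.
Qed.

Definition ipL (w : tensor) : 'Hom(tensor, K^o) := linfun (fun T : tensor => ip T w : K^o).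

Lemma ipLE w T : ipL w T = ip T w.
Proof. by rewrite /ipL (lfunE_lin (@ip_linear w)). Qed.

Lemma notin_ker (U : {vspace tensor}) w v :
  (U <= lker (ipL w))%VS -> ip v w != 0 -> v \notin U.
Proof.
move=> sU nz; apply/negP => vU.
by move: (subvP sU v vU); rewrite memv_ker ipLE (negbTE nz).
Qed.

Definition B (r : 'I_k) : seq K :=
  [seq a j r p 0 1 / a j r p 0 0 | j <- enum 'I_k, p <- enum 'I_(d r)].

Definition gam (r : 'I_k) (n : nat) : 'rV[K]_2 := vec1 (tv (B r) (d r).+1 n).

Lemma gam_indep r n n' : (n <= d r)%N -> (n' <= d r)%N -> n != n' ->
  det2 (gam r n) (gam r n') != 0.
Proof.
move=> hn hn' nn; rewrite det2_vec1 subr_eq0; apply/eqP => /tv_inj.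
by move=> h; move: nn; rewrite h ?eqxx.
Qed.

Lemma gam_a j r p n : a j r p != 0 -> (n <= d r)%N -> det2 (a j r p) (gam r n) != 0.
Proof.
move=> anz hn; apply: det2_vec1_neq0 => //.
apply/eqP => h; have hn1 : (n < (d r).+1)%N by rewrite ltnS.
have := tv_notin (B r) hn1; rewrite h /B.
by rewrite (allpairs_f (fun j0 p0 => a j0 r p0 0 1 / a j0 r p0 0 0)) ?mem_enum.
Qed.

Hypothesis anz : forall j r (p : 'I_(d r)), r != j -> a j r p != 0.

Definition W (x : slot -> 'rV[K]_2) : tensor := pure (fun s => perp (x s)).
Definition X0 (s : slot) := gam (tag s) (tagged s).+1.
Definition Xs (s0 s : slot) :=
  if tag s == tag s0 then gam (tag s) (bump (tagged s0).+1 (tagged s)) else X0 s.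
Definition Es (s : slot) := Ev (tag s) (gam (tag s) (tagged s).+1).

Lemma ipEv l c x : ip (Ev l c) (W x) =
  \prod_s det2 (if tag s == l then c else a l (tag s) (tagged s)) (x s).
Proof. exact: ip_pure. Qed.

Lemma C1 s0 s1 : s0 != s1 -> ip (Es s1) (W (Xs s0)) = 0.
Proof.
move=> ne; rewrite ipEv; apply/eqP/prodf_eq0.
case: s0 s1 ne => [l0 p0] [l1 p1] ne /=.
case: (eqVneq l1 l0) => [e|nl].
  subst l1.
  have np : p0 != p1 by apply: contraNneq ne => ->.
  have [lt|gt] := ltnP p1 p0.
    have h : (p1.+1 < d l0)%N := leq_ltn_trans lt (ltn_ord p0).
    exists (Tagged (fun r => 'I_(d r)) (Ordinal h)) => //=.
    rewrite eqxx /Xs /= eqxx /bump.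
    have -> : (p0.+1 <= p1.+1)%N = false by apply/negbTE; rewrite -ltnNge ltnS.
    by rewrite add0n det2xx.
  exists (Tagged (fun r => 'I_(d r)) p1) => //=.
  rewrite eqxx /Xs /= eqxx /bump.
  have -> : (p0.+1 <= p1)%N by rewrite ltn_neqAle np gt.
  by rewrite add1n det2xx.
exists (Tagged (fun r => 'I_(d r)) p1) => //=.
by rewrite eqxx /Xs /= (negbTE nl) det2xx.
Qed.

Lemma C2 s0 : ip (Es s0) (W (Xs s0)) != 0.
Proof.
rewrite ipEv; apply/prodf_neq0 => s _.
case: s0 s => [l0 p0] [r p] /=; rewrite /Xs /=.
case: (eqVneq r l0) => [e|nl].
  subst r; apply: gam_indep => //.
    by rewrite /bump; have := ltn_ord p; case: (p0.+1 <= p)%N => /= h; [rewrite add1n | rewrite add0n ltnW].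
  by rewrite ?(ltn_ord p0); apply: neq_bump.
by apply: gam_a => //; apply: anz.
Qed.

Lemma C3 s : ip (Es s) (W X0) = 0.
Proof.
rewrite ipEv; apply/eqP/prodf_eq0; exists s => //.
by rewrite eqxx /X0 det2xx.
Qed.

Lemma C4 r : ip (Ev r (gam r 0)) (W X0) != 0.
Proof.
rewrite ipEv; apply/prodf_neq0 => -[r' p] _ /=; rewrite /X0 /=.
case: (eqVneq r' r) => [e|nl].
  by subst r'; apply: gam_indep.
by apply: gam_a => //; apply: anz.
Qed.

Section Psi.
Variables (j0 r0 : 'I_k) (p q : 'I_(d r0)).
Hypothesis rj : r0 != j0.
Hypothesis hdet : det2 (a j0 r0 p) (a j0 r0 q) != 0.

Let sp : slot := Tagged (fun r => 'I_(d r)) p.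
Let sq : slot := Tagged (fun r => 'I_(d r)) q.
Let ap := a j0 r0 p.
Let aq := a j0 r0 q.

Lemma pq : p != q.
Proof. by apply: contraNneq hdet => e; rewrite /ap /aq -e det2xx. Qed.

Lemma spq : sp != sq.
Proof. by rewrite /sp /sq eq_Tagged /= pq. Qed.

Definition Y1 (s : slot) := if s == sp then aq else if s == sq then ap else X0 s.
Definition Y2 (s : slot) := if s == sp then ap else if s == sq then aq else X0 s.
Definition WP : tensor := [ffun i => W Y1 i - W Y2 i].

Lemma split2 (F : slot -> K) :
  \prod_s F s = F sp * F sq * \prod_(s | (s != sp) && (s != sq)) F s.
Proof.
rewrite (bigD1 sp) // (bigD1 sq) /=; last by rewrite eq_sym spq.
by rewrite mulrA.
Qed.

Lemma ipWP v : ip (pure v) WP =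
  (det2 (v sp) aq * det2 (v sq) ap - det2 (v sp) ap * det2 (v sq) aq) *
  \prod_(s | (s != sp) && (s != sq)) det2 (v s) (X0 s).
Proof.
have -> : ip (pure v) WP = ip (pure v) (W Y1) - ip (pure v) (W Y2).
  by rewrite /ip -sumrB; apply: eq_bigr => i _; rewrite /WP !ffunE mulrBr.
have nqp : (sq == sp) = false by rewrite eq_sym (negbTE spq).
rewrite !ip_pure !split2 /Y1 /Y2 !eqxx nqp.
rewrite [RHS]mulrBl; congr (_ * _ - _ * _).
  by apply: eq_bigr => s /andP [/negbTE -> /negbTE ->].
by apply: eq_bigr => s /andP [/negbTE -> /negbTE ->].
Qed.

Lemma C5b c : ip (Ev r0 c) WP = 0.
Proof.
rewrite /Ev ipWP /= !eqxx.
by rewrite [det2 c aq * _]mulrC subrr mul0r.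
Qed.

Lemma C5a s1 : ip (Es s1) WP = 0.
Proof.
case: (eqVneq (tag s1) r0) => [e|ne].
  by rewrite /Es; move: (gam _ _) => c; rewrite e C5b.
rewrite /Es /Ev ipWP; apply/eqP; rewrite mulf_eq0; apply/orP; right.
apply/prodf_eq0; exists s1.
  apply/andP; split; apply: contra ne => /eqP -> //.
by rewrite eqxx /X0 det2xx.
Qed.

Lemma C6 : ip (Ev j0 (gam j0 0)) WP != 0.
Proof.
rewrite /Ev ipWP /= (negbTE rj) mulf_neq0 //.
  rewrite !det2xx !mulr0 subr0 (det2C ap aq) mulrN oppr_eq0 mulf_neq0 //.
apply/prodf_neq0 => -[r' p'] _ /=; rewrite /X0 /=.
case: (eqVneq r' j0) => [e|nl].
  by subst r'; apply: gam_indep.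
by apply: gam_a => //; apply: anz.
Qed.

Definition SS : {vspace tensor} := (\sum_(j < k) insSym a j)%VS.
Definition Eseq : seq tensor := [seq Es s | s <- enum (predT : pred slot)].
Definition GG : {vspace tensor} := <<Eseq>>%VS.

Lemma Ev_SS j c : Ev j c \in SS.
Proof.
have := Ev_in j c; rewrite !memvE => h; apply: subv_trans h _.
exact: (sumv_sup j).
Qed.

Lemma GG_sub : (GG <= SS)%VS.
Proof. by apply/span_subvP => x /mapP [s _ ->]; exact: Ev_SS. Qed.

Definition LF (T : tensor) : {ffun slot -> K^o} := [ffun s => ip T (W (Xs s))].

Lemma LF_linear : linear LF.
Proof.
move=> al T1 T2; apply/ffunP => s; rewrite !ffunE.
by rewrite -!ipLE linearP.
Qed.

Lemma dimGG : (#|{: slot}| <= \dim GG)%N.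
Proof.
have hfull : (fullv <= linfun LF @: GG)%VS.
  apply/subvP => f _; apply/memv_imgP.
  exists (\sum_s (f s / ip (Es s) (W (Xs s))) *: Es s).
    apply: memv_suml => s _; apply: memvZ; apply: memv_span.
    by apply: map_f; rewrite mem_enum.
  rewrite (lfunE_lin LF_linear); apply/ffunP => s; rewrite ffunE.
  rewrite -ipLE linear_sum (bigD1 s) //= big1 ?addr0.
    rewrite linearZ /= ipLE; rewrite -[_ *: _]/(_ * _) divfK //; apply: C2.
  move=> s' ns'; rewrite linearZ /= ipLE (@C1 s s') ?scaler0 //.
  by apply: contraNneq ns' => ->.
have := dimvS hfull; rewrite dimvf.
have := limg_ker_dim (linfun LF) GG.
rewrite /dim /= => h1 h2.
have h3 : (#|{: slot}| <= \dim (linfun LF @: GG))%N.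
  by move: h2; rewrite -[X in (_ * X)%N]/1%N muln1.
apply: leq_trans h3 _; rewrite -h1; exact: leq_addl.
Qed.

Lemma lt_add_line (U : {vspace tensor}) v : v \notin U -> (\dim U < \dim (U + <[v]>))%N.
Proof.
move=> vU; rewrite (ltn_leqif (dimv_leqif_sup (addvSl U <[v]>))).
by rewrite subv_add subvv /= -memvE.
Qed.

Lemma card_slot : #|{: slot}| = (\sum_(j < k) d j)%N.
Proof.
rewrite card_tagged sumnE big_map big_enum /=.
by apply: eq_bigr => j _; rewrite card_ord.
Qed.

Lemma bigdim : ((\sum_(j < k) d j).+2 <= \dim SS)%N.
Proof.
set EA := Ev r0 (gam r0 0); set EB := Ev j0 (gam j0 0).
have h1 : EA \notin GG.
  apply: (@notin_ker _ (W X0)); last exact: C4.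
  by apply/span_subvP => x /mapP [s _ ->]; rewrite memv_ker ipLE C3.
have h2 : EB \notin (GG + <[EA]>)%VS.
  apply: (@notin_ker _ WP); last exact: C6.
  rewrite subv_add; apply/andP; split.
    by apply/span_subvP => x /mapP [s _ ->]; rewrite memv_ker ipLE C5a.
  by rewrite -memvE memv_ker ipLE C5b.
have hS : (GG + <[EA]> + <[EB]> <= SS)%VS.
  by rewrite !subv_add GG_sub -!memvE !Ev_SS.
apply: leq_trans (dimvS hS); apply: leq_trans (lt_add_line h2).
rewrite ltnS; apply: leq_trans (lt_add_line h1).
by rewrite ltnS -card_slot; exact: dimGG.
Qed.

End Psi.

End Main.

Lemma cor_num (K : numFieldType) : cor233_over K.
Proof.
move=> k d a _ anz hdim j r p q rj.
case: (eqVneq (det2 (a j r p) (a j r q)) 0) => [h0|hne].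
  apply/eqP; rewrite eqEdim !dim_vline !anz //= andbT -memvE.
  by apply: parallel => //; apply: anz.
have := bigdim anz rj hne.
by rewrite /SS hdim ltnS ltnn.
Qed.

Theorem corollary2p33 (R : realType) :
  cor233_over R /\ cor233_over (complex R).
Proof. by split; apply: cor_num. Qed.
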